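(* Let $A\in\mathbb{R}^{n\times n}$ be symmetric, let $W_k\in\mathbb{R}^{n\times m}$ satisfy $W_k^TW_k=I_m$, and let $v_{k-1},v_k\in\mathbb{R}^{n\times p}$ and $\alpha_k,\beta_k\in\mathbb{R}^{p\times p}$ be given. Define $q_{k+j},\beta_{k+j}$, $j\ge1$, by the continuation process \[ \begin{aligned} \tilde q_{k+1}&=Av_k-v_k\alpha_k-v_{k-1}\beta_k^T, & q_{k+1}\beta_{k+1}&=(I_n-P_1)\tilde q_{k+1},\\ \tilde q_{k+2}&=Aq_{k+1}-v_k\beta_{k+1}^T, & q_{k+2}\beta_{k+2}&=(I_n-P_2)\tilde q_{k+2},\\ \tilde q_{k+j}&=Aq_{k+j-1}-q_{k+j-2}\beta_{k+j-1}^T, & q_{k+j}\beta_{k+j}&=(I_n-P_j)\tilde q_{k+j},\quad j\ge3, \end{aligned} \] where $P_1=W_kW_k^T$, $P_2=P_1+q_{k+1}q_{k+1}^T$, $P_j=P_2+q_{k+j-1}q_{k+j-1}^T$ for $j\ge3$, and the columns of $q_{k+j}$ form an orthonormal basis of the column space of $(I_n-P_j)\tilde q_{k+j}$, with $\beta_{k+j}$ of full row rank. Then the process can be written as \[ \begin{aligned} q_{k+1}\beta_{k+1}&=Av_k-v_k\alpha_k-v_{k-1}\beta_k^T-h_k,\\ q_{k+2}\beta_{k+2}&=Aq_{k+1}-q_{k+1}\alpha_{k+1}-v_k\beta_{k+1}^T-h_{k+1},\\ q_{k+j}\beta_{k+j}&=Aq_{k+j-1}-q_{k+j-1}\alpha_{k+j-1}-q_{k+j-2}\beta_{k+j-1}^T-h_{k+j-1},\quad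 j\ge3, \end{aligned} \] where \[ \alpha_{k+1}=q_{k+1}^T(Aq_{k+1}-v_k\beta_{k+1}^T),\qquad \alpha_{k+j-1}=q_{k+j-1}^TAq_{k+j-1}\ (j\ge3), \] and \[ \begin{aligned} h_k&=P_1\left(Av_k-v_k\alpha_k-v_{k-1}\beta_k^T\right),\\ h_{k+1}&=P_1\left(Aq_{k+1}-v_k\beta_{k+1}^T\right),\\ h_{k+j-1}&=P_1Aq_{k+j-1}+q_{k+1}\beta_{k+1}v_k^Tq_{k+j-1},\quad j\ge3. \end{aligned} \]
   Context: In cases of rank deficiency the number of columns of $q_{k+j}$ is reduced accordingly and $\beta_{k+j}$ becomes rectangular with full row rank. *)

(* Defs.v *)
From HB Require Import structures.
From mathcomp Require Export all_boot all_order all_algebra.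
From mathcomp Require Export reals.
Set Implicit Arguments. Unset Strict Implicit. Unset Printing Implicit Defensive.
Import GRing.Theory Num.Theory.
Local Open Scope ring_scope.

(* [onb_col Q M]: the columns of Q form an orthonormal basis of the column
   space of M, i.e. Q^T Q = I and the column space of Q (= row space of Q^T)
   equals the column space of M. *)
Definition onb_col {R : fieldType} {n c d : nat}
  (Q : 'M[R]_(n, c)) (M : 'M[R]_(n, d)) : Prop :=
  Q^T *m Q = 1%:M /\ (Q^T == M^T)%MS.

(* Main.v *)
Require Import Defs.
From HB Require Import structures.
From mathcomp Require Import all_boot all_order all_algebra.
From mathcomp Require Import reals zify.
Import GRing.Theory Num.Theory.
Local Open Scope ring_scope.

Set Implicit Arguments. Unset Strict Implicit.
Lemma onb_mul (R : fieldType) n c d (Q : 'M[R]_(n, c)) (M : 'M[R]_(n, d)) :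
  onb_col Q M -> exists D : 'M[R]_(d, c), Q = M *m D.
Proof.
case=> _ /andP[/submxP[D HD] _]; exists D^T.
by rewrite -[Q]trmxK HD trmx_mul trmxK.
Qed.

Lemma onb_orth (R : fieldType) n c d s (Q : 'M[R]_(n, c)) (P : 'M[R]_n)
  (X : 'M[R]_(n, d)) (Y : 'M[R]_(n, s)) :
  onb_col Q ((1%:M - P) *m X) -> Y^T *m (1%:M - P) = 0 -> Y^T *m Q = 0.
Proof. by move=> /onb_mul [D ->] HY; rewrite !mulmxA HY !mul0mx. Qed.

Lemma tr0 (R : fieldType) n a b (X : 'M[R]_(n,a)) (Y : 'M[R]_(n,b)) :
  X^T *m Y = 0 -> Y^T *m X = 0.
Proof. by move=> H; rewrite -[Y^T *m X]trmxK trmx_mul trmxK H trmx0. Qed.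

Lemma symA (R : fieldType) n a b (A : 'M[R]_n) (X : 'M[R]_(n,a)) (Y : 'M[R]_(n,b)) :
  A^T = A -> X^T *m (A *m Y) = (Y^T *m (A *m X))^T.
Proof. by move=> AT; rewrite !trmx_mul trmxK AT mulmxA. Qed.

Lemma expR1 (R : fieldType) n m s (W : 'M[R]_(n,m)) (Y : 'M[R]_(n,s)) :
  Y^T *m (1%:M - W *m W^T) = Y^T - (Y^T *m W) *m W^T.
Proof. by rewrite mulmxBr mulmx1 mulmxA. Qed.

Lemma expR2 (R : fieldType) n m s c1 (W : 'M[R]_(n,m)) (q1 : 'M[R]_(n,c1)) (Y : 'M[R]_(n,s)) :
  Y^T *m (1%:M - (W *m W^T + q1 *m q1^T)) = Y^T - (Y^T *m W) *m W^T - (Y^T *m q1) *m q1^T.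
Proof. by rewrite mulmxBr mulmx1 mulmxDr !mulmxA opprD addrA. Qed.

Lemma expR3 (R : fieldType) n m s c1 c2 (W : 'M[R]_(n,m)) (q1 : 'M[R]_(n,c1))
  (Q : 'M[R]_(n,c2)) (Y : 'M[R]_(n,s)) :
  Y^T *m (1%:M - (W *m W^T + q1 *m q1^T + Q *m Q^T)) =
  Y^T - (Y^T *m W) *m W^T - (Y^T *m q1) *m q1^T - (Y^T *m Q) *m Q^T.
Proof. by rewrite mulmxBr mulmx1 !mulmxDr !mulmxA !opprD !addrA. Qed.

Lemma expP3 (R : fieldType) n m s c1 c2 (W : 'M[R]_(n,m)) (q1 : 'M[R]_(n,c1))
  (Q : 'M[R]_(n,c2)) (Y : 'M[R]_(n,s)) :
  Y^T *m (W *m W^T + q1 *m q1^T + Q *m Q^T) =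
  (Y^T *m W) *m W^T + (Y^T *m q1) *m q1^T + (Y^T *m Q) *m Q^T.
Proof. by rewrite !mulmxDr !mulmxA. Qed.

Lemma expL3 (R : fieldType) n m k c1 c2 (W : 'M[R]_(n,m)) (q1 : 'M[R]_(n,c1))
  (Q : 'M[R]_(n,c2)) (X : 'M[R]_(n,k)) :
  (1%:M - (W *m W^T + q1 *m q1^T + Q *m Q^T)) *m X =
  X - W *m (W^T *m X) - q1 *m (q1^T *m X) - Q *m (Q^T *m X).
Proof. by rewrite mulmxBl mul1mx !mulmxDl -!mulmxA !opprD !addrA. Qed.

Lemma qt_split (R : fieldType) n c k (P : 'M[R]_n) (qt : 'M[R]_(n,k)) (Q : 'M[R]_(n,c)) b :
  Q *m b = (1%:M - P) *m qt -> qt = Q *m b + P *m qt.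
Proof. by move=> ->; rewrite mulmxBl mul1mx subrK. Qed.

Lemma rearr (V : zmodType) (a b c d e : V) : a - e - b - c - d = a - d - e - (b + c).
Proof.
by rewrite opprD !addrA [a - e - b - c - d]addrAC [a - e - b - d]addrAC [a - e - d]addrAC.
Qed.

Lemma expP2 (R : fieldType) n m s c1 (W : 'M[R]_(n,m)) (q1 : 'M[R]_(n,c1))
  (Y : 'M[R]_(n,s)) :
  Y^T *m (W *m W^T + q1 *m q1^T) = (Y^T *m W) *m W^T + (Y^T *m q1) *m q1^T.
Proof. by rewrite !mulmxDr !mulmxA. Qed.

Lemma expL2 (R : fieldType) n m k c1 (W : 'M[R]_(n,m)) (q1 : 'M[R]_(n,c1))
  (X : 'M[R]_(n,k)) :
  (1%:M - (W *m W^T + q1 *m q1^T)) *m X =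
  X - W *m (W^T *m X) - q1 *m (q1^T *m X).
Proof. by rewrite mulmxBl mul1mx !mulmxDl -!mulmxA !opprD !addrA. Qed.

Lemma rearr2 (V : zmodType) (a b c d : V) : a - b - c - d = a - d - b - c.
Proof. by rewrite [a - b - c - d]addrAC [a - b - d]addrAC. Qed.

Lemma orth_split (R : fieldType) n c k s (P : 'M[R]_n) (qt : 'M[R]_(n,k))
  (Q : 'M[R]_(n,c)) b (Y : 'M[R]_(n,s)) (Z : 'M[R]_(n,k)) :
  Q *m b = (1%:M - P) *m qt -> Y^T *m P = 0 ->
  Y^T *m (qt + Z) = Y^T *m Q *m b + Y^T *m Z.
Proof.
move=> E HY; rewrite (qt_split E) !mulmxDr !mulmxA HY mul0mx addr0.
by rewrite -mulmxA.
Qed.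

Unset Implicit Arguments.
Theorem theorem4 (R : realType) (n m : nat) (r : nat -> nat)
  (A : 'M[R]_n) (W : 'M[R]_(n, m))
  (vkm1 vk : 'M[R]_(n, r 0%N)) (alphak betak : 'M[R]_(r 0%N))
  (q : forall j : nat, 'M[R]_(n, r j))
  (beta : forall j : nat, 'M[R]_(r j, r j.-1)) :
  A^T = A ->
  W^T *m W = 1%:M ->
  let P1 : 'M[R]_n := W *m W^T in
  let P2 : 'M[R]_n := P1 + q 1%N *m (q 1%N)^T in
  let qt1 := A *m vk - vk *m alphak - vkm1 *m betak^T in
  let qt2 := A *m q 1%N - vk *m (beta 1%N)^T in
  (* j = 1 *)
  q 1%N *m beta 1%N = (1%:M - P1) *m qt1 ->
  onb_col (q 1%N) ((1%:M - P1) *m qt1) ->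
  row_free (beta 1%N) ->
  (* j = 2 *)
  q 2%N *m beta 2%N = (1%:M - P2) *m qt2 ->
  onb_col (q 2%N) ((1%:M - P2) *m qt2) ->
  row_free (beta 2%N) ->
  (* j = i + 3 >= 3 *)
  (forall i : nat,
     let Pj : 'M[R]_n := P2 + q i.+2 *m (q i.+2)^T in
     let qtj := A *m q i.+2 - q i.+1 *m (beta i.+2)^T in
     [/\ q i.+3 *m beta i.+3 = (1%:M - Pj) *m qtj,
         onb_col (q i.+3) ((1%:M - Pj) *m qtj)
       & row_free (beta i.+3)]) ->
  let alpha1 := (q 1%N)^T *m (A *m q 1%N - vk *m (beta 1%N)^T) in
  let hk := P1 *m (A *m vk - vk *m alphak - vkm1 *m betak^T) in
  let hk1 := P1 *m (A *m q 1%N - vk *m (beta 1%N)^T) in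
  [/\ q 1%N *m beta 1%N = A *m vk - vk *m alphak - vkm1 *m betak^T - hk,
      q 2%N *m beta 2%N
        = A *m q 1%N - q 1%N *m alpha1 - vk *m (beta 1%N)^T - hk1
    & forall i : nat,
        let alphaj := (q i.+2)^T *m A *m q i.+2 in
        let hj := P1 *m A *m q i.+2
                  + q 1%N *m beta 1%N *m vk^T *m q i.+2 in
        q i.+3 *m beta i.+3
          = A *m q i.+2 - q i.+2 *m alphaj - q i.+1 *m (beta i.+2)^T - hj].
Proof.
move=> AT WW; cbv zeta.
move=> E1 O1 F1 E2 O2 F2 H.
have qq : forall j, (0 < j)%N -> (q j)^T *m q j = 1%:M.
  case=> [//|[|[|i]]] _; [exact: (proj1 O1) | exact: (proj1 O2) |].
  by case: (H i) => _ [].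
have orth : forall b, (0 < b)%N -> W^T *m q b = 0 /\
    (forall a, (0 < a < b)%N -> (q a)^T *m q b = 0).
  elim/ltn_ind => -[//|[|[|i]]] IH _.
  - split; last by move=> a Ha; exfalso; lia.
    by apply: (onb_orth O1); rewrite expR1 WW mul1mx subrr.
  - have [Wq1 _] := IH 1%N isT isT.
    split.
      by apply: (onb_orth O2); rewrite expR2 WW mul1mx Wq1 mul0mx subrr subr0.
    move=> a Ha; have -> : a = 1%N by lia.
    by apply: (onb_orth O2); rewrite expR2 (tr0 Wq1) qq // mul0mx mul1mx subr0 subrr.
  - have [E O F] := H i.
    have [WQ QQ] := IH i.+2 (ltnSn _) isT.
    have [Wq1 _] := IH 1%N ltac:(lia) isT.
    split.
      by apply: (onb_orth O); rewrite expR3 WW mul1mx Wq1 WQ !mul0mx subrr !subr0.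
    move=> a Ha.
    have [->|a1] := eqVneq a 1%N.
      by apply: (onb_orth O); rewrite expR3 (tr0 Wq1) qq // (QQ 1%N ltac:(lia)) !mul0mx mul1mx !subr0 subrr.
    have [->|a2] := eqVneq a i.+2.
      by apply: (onb_orth O); rewrite expR3 (tr0 WQ) (tr0 (QQ 1%N ltac:(lia))) qq // !mul0mx mul1mx !subr0 subrr.
    move: a1 a2 Ha => /eqP a1 /eqP a2 /andP[Ha1 Ha2].
    have [c ea] : exists c, a = c.+2 by exists a.-2; lia.
    subst a.
    have [Wa Qa] := IH c.+2 ltac:(lia) isT.
    apply: (row_free_inj F); rewrite /= mul0mx -mulmxA E mulmxA expR3 (tr0 Wa) (tr0 (Qa 1%N ltac:(lia))) (QQ c.+2 ltac:(lia)) !mul0mx !subr0.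
    rewrite mulmxBr (symA (q c.+2) (q i.+2) AT).
    have [Ec Oc Fc] := H c.
    have Aqc : A *m q c.+2 = (A *m q c.+2 - q c.+1 *m (beta c.+2)^T) + q c.+1 *m (beta c.+2)^T by rewrite subrK.
    rewrite Aqc (orth_split _ Ec); last first.
      by rewrite expP3 (tr0 WQ) (tr0 (QQ 1%N ltac:(lia))) (tr0 (QQ c.+2 ltac:(lia))) !mul0mx !addr0.
    have [lt|eq] : (c.+1 < i)%N \/ c.+1 = i by lia.
      have [_ Q'] := IH i.+1 ltac:(lia) isT.
      by rewrite !mulmxA (tr0 (QQ c.+3 ltac:(lia))) (tr0 (QQ c.+1 ltac:(lia))) (Q' c.+2 ltac:(lia)) !mul0mx addr0 trmx0 subrr.
    subst i.
    by rewrite !mulmxA qq // (tr0 (QQ c.+1 ltac:(lia))) qq // !mul1mx mul0mx addr0 subrr.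
split.
- by rewrite E1 mulmxBl mul1mx.
- by rewrite E2 expL2 -!mulmxA rearr2.
move=> i.
have [E O F] := H i.
have [WQ QQ] := orth i.+2 isT.
have [WQ' QQ'] := orth i.+1 isT.
have [Wq1 _] := orth 1%N isT.
have hW : W^T *m (A *m q i.+2 - q i.+1 *m (beta i.+2)^T) = W^T *m (A *m q i.+2).
  by rewrite mulmxBr [W^T *m (q i.+1 *m _)]mulmxA WQ' mul0mx subr0.
have hQ : (q i.+2)^T *m (A *m q i.+2 - q i.+1 *m (beta i.+2)^T) = (q i.+2)^T *m (A *m q i.+2).
  by rewrite mulmxBr [(q i.+2)^T *m (q i.+1 *m _)]mulmxA (tr0 (QQ i.+1 ltac:(lia))) mul0mx subr0.
have h1 : (q 1%N)^T *m (A *m q i.+2 - q i.+1 *m (beta i.+2)^T) = beta 1%N *m vk^T *m q i.+2.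
  rewrite mulmxBr (symA (q 1%N) (q i.+2) AT).
  have Aq1 : A *m q 1%N = (A *m q 1%N - vk *m (beta 1%N)^T) + vk *m (beta 1%N)^T by rewrite subrK.
  rewrite Aq1 (orth_split _ E2); last first.
    by rewrite expP2 (tr0 WQ) (tr0 (QQ 1%N ltac:(lia))) !mul0mx !addr0.
  case: i E O F WQ QQ WQ' QQ' hW hQ => [|i] E O F WQ QQ WQ' QQ' hW hQ.
    by rewrite !mulmxA qq // qq // !mul1mx raddfD /= !trmx_mul !trmxK addrAC subrr add0r mulmxA.
  have [_ Q2] := orth i.+2 isT.
  by rewrite !mulmxA (tr0 (QQ 2%N ltac:(lia))) (Q2 1%N ltac:(lia)) !mul0mx add0r trmx_mul !trmx_mul trmxK mulmxA subr0 trmxK.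
by rewrite E expL3 hW hQ h1 !mulmxA rearr.
Qed.
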